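(* Let $(L,d)$ be a metric locale without isolated points. If $L$ is extremally disconnected, then $L$ is Boolean (i.e. $a\vee a^*=1$ for every $a\in L$).
   Context: A frame (locale) $L$ is a complete lattice in which finite meets distribute over arbitrary joins; $a^*$ denotes the pseudocomplement of $a$ (largest $x$ with $x\wedge a=0$). $L$ is extremally disconnected if $a^*\vee a^{**}=1$ for all $a\in L$. A diameter on $L$ is a map $d\colon L\to[0,+\infty]$ with (D1) $d(0)=0$; (D2) $a\le b\Rightarrow d(a)\le d(b)$; (D3) $a\wedge b\neq 0\Rightarrow d(a\vee b)\le d(a)+d(b)$; (D4) for every $\varepsilon>0$, $\bigvee\{a\in L\mid d(a)<\varepsilon\}=1$. Write $b\lhd_\varepsilon a$ if for every $c\in L$ with $d(c)<\varepsilon$, $c\wedge b\ne0$ implies $c\le a$. The diameter is admissible if $a=\bigvee\{b\in L\mid b\lhd_\varepsilon a \text{ for some }\varepsilon>0\}$ for all $a\in L$; a metric locale is a pair $(L,d)$ with $d$ an admissible diameter. A sublocale of $L$ is a subset closed under arbitrary meets and such that $a\to s$ lies in it whenever $s$ does; the open sublocale of $a$ is $\mathfrak{o}(a)=\{a\to b\mid b\in L\}$. A point of $L$ is $p\ne1$ such that $a\wedge b\le p$ implies $a\le p$ or $b\le p$; it is isolated if the sublocale $\{1,p\}$ equals $\mathfrak{o}(a)$ for some $a\in L$. *)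

(* Defs.v *)
From Stdlib Require Import Reals.
From Coquelicot Require Import Rbar.
Set Implicit Arguments.
Open Scope R_scope.

Record Frame := {
  car :> Type;
  le : car -> car -> Prop;
  le_refl : forall a, le a a;
  le_trans : forall a b c, le a b -> le b c -> le a c;
  le_antisym : forall a b, le a b -> le b a -> a = b;
  join : (car -> Prop) -> car;
  join_ub : forall (S : car -> Prop) x, S x -> le x (join S);
  join_least : forall (S : car -> Prop) y, (forall x, S x -> le x y) -> le (join S) y;
  meet : car -> car -> car;
  meet_lbl : forall a b, le (meet a b) a;
  meet_lbr : forall a b, le (meet a b) b;
  meet_glb : forall a b c, le c a -> le c b -> le c (meet a b);
  meet_join_distr : forall a (S : car -> Prop),
    meet a (join S) = join (fun y => exists x, S x /\ y = meet a x)
}.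

Section FrameNotions.
Variable L : Frame.

Definition top : L := join L (fun _ => True).
Definition bot : L := join L (fun _ => False).
Definition join2 (a b : L) : L := join L (fun x => x = a \/ x = b).

Definition himp (a b : L) : L := join L (fun x => le L (meet L x a) b).

Definition pcompl (a : L) : L := join L (fun x => meet L x a = bot).

Definition extremally_disconnected : Prop :=
  forall a : L, join2 (pcompl a) (pcompl (pcompl a)) = top.

Definition boolean : Prop := forall a : L, join2 a (pcompl a) = top.

Definition diameter (d : L -> Rbar) : Prop :=
  (forall a, Rbar_le (Finite 0) (d a)) /\
  d bot = Finite 0 /\
  (forall a b, le L a b -> Rbar_le (d a) (d b)) /\
  (forall a b, meet L a b <> bot ->
       Rbar_le (d (join2 a b)) (Rbar_plus (d a) (d b))) /\
  (forall eps : R, 0 < eps ->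
       join L (fun a => Rbar_lt (d a) (Finite eps)) = top).

Definition well_inside (d : L -> Rbar) (eps : R) (b a : L) : Prop :=
  forall c : L, Rbar_lt (d c) (Finite eps) -> meet L c b <> bot -> le L c a.

Definition admissible (d : L -> Rbar) : Prop :=
  forall a : L, a = join L (fun b => exists eps, 0 < eps /\ well_inside d eps b a).

Definition metric_diameter (d : L -> Rbar) : Prop := diameter d /\ admissible d.

Definition open_sublocale (a : L) : L -> Prop := fun x => exists b, x = himp a b.

Definition is_point (p : L) : Prop :=
  p <> top /\ forall a b, le L (meet L a b) p -> le L a p \/ le L b p.

Definition isolated_point (p : L) : Prop :=
  is_point p /\
  exists a : L, forall x : L, (x = top \/ x = p) <-> open_sublocale a x.

End FrameNotions.

(* Main.v *)
Require Import Defs.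
From Stdlib Require Import Reals Lra ClassicalEpsilon Classical.
From Coquelicot Require Import Rbar.
From mathcomp Require classical_sets.

Lemma my_zorn (T : Type) (P : (T -> Prop) -> Prop) :
  (forall F : (T->Prop) -> Prop, (forall X, F X -> P X) ->
     (forall X Y, F X -> F Y -> (forall t, X t -> Y t) \/ (forall t, Y t -> X t)) ->
     P (fun a => exists2 X, F X & X a)) ->
  exists A, P A /\ forall B, (forall t, A t -> B t) -> ~ (forall t, B t -> A t) -> ~ P B.
Proof.
  intros H.
  destruct (@classical_sets.Zorn_bigcup T P H) as [A [PA HA]].
  exists A. split. exact PA. intros B H1 H2. apply HA. split; assumption.
Qed.

Section Basic.
Lemma bot_le (L : Frame) (x : L) : le L (bot L) x.
Proof. apply join_least. intros y [] . Qed.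

Lemma le_top (L : Frame) (x : L) : le L x (top L).
Proof. apply join_ub. exact I. Qed.

Lemma le_bot_eq (L : Frame) (x : L) : le L x (bot L) -> x = bot L.
Proof. intros H. apply le_antisym; auto using bot_le. Qed.

Lemma meet_comm (L : Frame) (a b : L) : meet L a b = meet L b a.
Proof. apply le_antisym; apply meet_glb; auto using meet_lbl, meet_lbr. Qed.

Lemma le_meet_eq (L : Frame) (a b : L) : le L a b -> meet L a b = a.
Proof. intros H. apply le_antisym. apply meet_lbl. apply meet_glb; auto using le_refl. Qed.

Lemma meet_top (L : Frame) (a : L) : meet L a (top L) = a.
Proof. apply le_meet_eq, le_top. Qed.

Lemma meet_idem (L : Frame) (a : L) : meet L a a = a.
Proof. apply le_meet_eq, le_refl. Qed.

Lemma meet_mono (L : Frame) (a b c e : L) : le L a b -> le L c e -> le L (meet L a c) (meet L b e).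
Proof.
  intros H1 H2. apply meet_glb.
  eapply le_trans. apply meet_lbl. exact H1.
  eapply le_trans. apply meet_lbr. exact H2.
Qed.

Lemma le_meet_bot (L : Frame) (a b c e : L) : le L a b -> le L c e -> meet L b e = bot L -> meet L a c = bot L.
Proof.
  intros H1 H2 H3. apply le_bot_eq. rewrite <- H3. apply meet_mono; auto.
Qed.

Lemma nz_mono (L : Frame) (a b c e : L) : le L a b -> le L c e -> meet L a c <> bot L -> meet L b e <> bot L.
Proof. intros H1 H2 H3 H4. apply H3. eapply le_meet_bot; eauto. Qed.

Lemma le_nz (L : Frame) (a b : L) : le L a b -> a <> bot L -> b <> bot L.
Proof. intros H1 H2 H3. subst. apply H2. apply le_bot_eq. exact H1. Qed.

Lemma pc_le (L : Frame) (x y : L) : le L y (pcompl L x) <-> meet L y x = bot L.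
Proof.
  split.
  - intros H. apply le_bot_eq. eapply le_trans. apply meet_mono. exact H. apply le_refl.
    unfold pcompl. rewrite meet_comm, meet_join_distr.
    apply join_least. intros z [w [Hw ->]]. rewrite meet_comm, Hw. apply le_refl.
  - intros H. apply join_ub. exact H.
Qed.

Lemma pc_meet (L : Frame) (x : L) : meet L (pcompl L x) x = bot L.
Proof. apply pc_le, le_refl. Qed.

Lemma join_nz (L : Frame) (a : L) (S : L -> Prop) :
  meet L a (join L S) <> bot L -> exists x, S x /\ meet L a x <> bot L.
Proof.
  intros H. apply NNPP. intros H1. apply H. apply le_bot_eq.
  rewrite meet_join_distr. apply join_least. intros z [x [Sx ->]].
  destruct (classic (meet L a x = bot L)) as [E|E].
  rewrite E; apply le_refl. exfalso; apply H1; eauto.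
Qed.

Lemma join_nz1 (L : Frame) (S : L -> Prop) :
  join L S <> bot L -> exists x, S x /\ x <> bot L.
Proof.
  intros H. apply NNPP. intros H1. apply H. apply le_bot_eq.
  apply join_least. intros x Sx.
  destruct (classic (x = bot L)) as [E|E].
  rewrite E; apply le_refl. exfalso; apply H1; eauto.
Qed.
End Basic.

Section Metric.

Lemma rlt_fin (L : Frame) (d : L -> Rbar) (Hdiam : diameter L d) (c : L) (eps : R) :
  Rbar_lt (d c) (Finite eps) -> exists r, d c = Finite r /\ 0 <= r /\ r < eps.
Proof.
  destruct Hdiam as [H0 _]. specialize (H0 c). intros H.
  destruct (d c) as [r| |]; simpl in *; try contradiction.
  exists r. auto.
Qed.

Lemma d_mono (L : Frame) (d : L -> Rbar) (Hdiam : diameter L d) (x c : L) (eps : R) :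
  le L x c -> Rbar_lt (d c) (Finite eps) -> Rbar_lt (d x) (Finite eps).
Proof.
  destruct Hdiam as [_ [_ [H2 _]]]. intros H1 H. eapply Rbar_le_lt_trans. apply H2, H1. exact H.
Qed.

Lemma CL (L : Frame) (d : L -> Rbar) (Hdiam : diameter L d) (x z : L) (eps : R) :
  0 < eps -> (forall c, Rbar_lt (d c) (Finite eps) -> le L (meet L x c) z) -> le L x z.
Proof.
  destruct Hdiam as [_ [_ [_ [_ H4]]]]. intros He H.
  rewrite <- (meet_top L x). rewrite <- (H4 eps He). rewrite meet_join_distr.
  apply join_least. intros y [c [Hc ->]]. apply H, Hc.
Qed.

Lemma small_nz (L : Frame) (d : L -> Rbar) (Hdiam : diameter L d) (x : L) (eps : R) :
  0 < eps -> x <> bot L -> exists c, Rbar_lt (d c) (Finite eps) /\ meet L x c <> bot L.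
Proof.
  intros He Hx. apply NNPP. intros H. apply Hx. apply le_bot_eq.
  apply (CL L d Hdiam x (bot L) eps He). intros c Hc.
  destruct (classic (meet L x c = bot L)) as [E|E].
  rewrite E; apply le_refl. exfalso; apply H; eauto.
Qed.

Lemma wi_mono (L : Frame) (d : L -> Rbar) (eps eps' : R) (b a : L) :
  eps' <= eps -> well_inside L d eps b a -> well_inside L d eps' b a.
Proof.
  intros H1 H2 c Hc Hcb. apply H2; auto.
  eapply Rbar_lt_le_trans. exact Hc. simpl. exact H1.
Qed.

Lemma wi_le (L : Frame) (d : L -> Rbar) (Hdiam : diameter L d) (eps : R) (b a : L) :
  0 < eps -> well_inside L d eps b a -> le L b a.
Proof.
  intros He H. apply (CL L d Hdiam b a eps He). intros c Hc.
  destruct (classic (meet L c b = bot L)) as [E|E].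
  rewrite meet_comm, E. apply bot_le.
  eapply le_trans. apply meet_lbr. apply H; auto.
Qed.

Definition deep (L : Frame) (d : L -> Rbar) (e : L) (eps : R) : L :=
  join L (fun b => well_inside L d eps b e).

Lemma deep_mono (L : Frame) (d : L -> Rbar) (e : L) (eps eps' : R) :
  eps' <= eps -> le L (deep L d e eps) (deep L d e eps').
Proof.
  intros H. apply join_least. intros b Hb. apply join_ub. eapply wi_mono; eauto.
Qed.

Lemma wi_half (L : Frame) (d : L -> Rbar) (Hdiam : diameter L d) (eps : R) (b e : L) :
  0 < eps -> well_inside L d eps b e -> well_inside L d (eps/2) b (deep L d e (eps/2)).
Proof.
  intros He Hwi c Hc Hcb. unfold deep. apply join_ub. intros c' Hc' Hc'c.
  assert (Hj : le L (join2 L c c') e).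
  { apply Hwi.
    - pose proof Hdiam as [_ [_ [_ [H3 _]]]].
      eapply Rbar_le_lt_trans. apply H3. rewrite meet_comm. exact Hc'c.
      destruct (rlt_fin L d Hdiam c _ Hc) as [r [Er Hr]].
      destruct (rlt_fin L d Hdiam c' _ Hc') as [s [Es Hs]].
      rewrite Er, Es. simpl. lra.
    - eapply nz_mono. 3: exact Hcb. apply join_ub. left; reflexivity. apply le_refl. }
  eapply le_trans. 2: exact Hj. apply join_ub. right; reflexivity.
Qed.

Lemma F5 (L : Frame) (d : L -> Rbar) (Hdiam : diameter L d) (e x x' : L) (lam : R) :
  0 < lam -> le L x (deep L d e lam) -> meet L x' x <> bot L ->
  Rbar_lt (d x') (Finite (lam/2)) -> le L x' (deep L d e (lam/2)).
Proof.
  intros Hl Hx Hxx Hd'.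
  assert (H : meet L x' (deep L d e lam) <> bot L).
  { eapply nz_mono. 3: exact Hxx. apply le_refl. exact Hx. }
  destruct (join_nz L _ _ H) as [b [Hb Hb']].
  apply (wi_half L d Hdiam lam b e Hl Hb); auto.
Qed.

Lemma F6 (L : Frame) (d : L -> Rbar) (Hadm : admissible L d) (e y : L) :
  le L y e -> y <> bot L -> exists lam, 0 < lam /\ meet L y (deep L d e lam) <> bot L.
Proof.
  intros Hy Hy0.
  assert (H : meet L y e <> bot L) by (rewrite le_meet_eq; auto).
  rewrite (Hadm e) in H.
  destruct (join_nz L _ _ H) as [b [[eps [He Hb]] Hb']].
  exists eps. split; auto. eapply nz_mono. 3: exact Hb'. apply le_refl.
  apply join_ub. exact Hb.
Qed.

Lemma F7 (L : Frame) (d : L -> Rbar) (Hdiam : diameter L d) (e b : L) (eps : R)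
  (Hdense : forall c, meet L c e = bot L -> c = bot L) :
  0 < eps -> meet L (meet L b e) (pcompl L (deep L d e eps)) = bot L -> le L b e.
Proof.
  intros He H. apply (CL L d Hdiam b e eps He). intros c Hc.
  destruct (classic (meet L c (deep L d e eps) = bot L)) as [E|E].
  - assert (Hz : meet L b c = bot L).
    { apply Hdense. apply le_bot_eq. rewrite <- H.
      apply meet_glb. apply meet_glb.
      eapply le_trans. apply meet_lbl. apply meet_lbl. apply meet_lbr.
      eapply le_trans. apply meet_lbl. eapply le_trans. apply meet_lbr.
      apply pc_le. exact E. }
    rewrite Hz. apply bot_le.
  - destruct (join_nz L _ _ E) as [b' [Hb' Hb'']].
    eapply le_trans. apply meet_lbr. apply Hb'; auto.
Qed.

End Metric.

Lemma atom_iso (L : Frame) (x : L) :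
  x <> bot L -> (forall y, le L y x -> y = bot L \/ y = x) -> isolated_point L (pcompl L x).
Proof.
  intros Hx Hat. split.
  - split.
    + intros H. apply Hx. rewrite <- (meet_idem L x). apply pc_le. rewrite H. apply le_top.
    + intros a b H.
      destruct (classic (le L a (pcompl L x))) as [Ha|Ha]; auto.
      destruct (classic (le L b (pcompl L x))) as [Hb|Hb]; auto.
      exfalso.
      assert (Xa : le L x a).
      { destruct (Hat (meet L a x) (meet_lbr L a x)) as [E|E].
        exfalso; apply Ha, pc_le, E. rewrite <- E. apply meet_lbl. }
      assert (Xb : le L x b).
      { destruct (Hat (meet L b x) (meet_lbr L b x)) as [E|E].
        exfalso; apply Hb, pc_le, E. rewrite <- E. apply meet_lbl. }
      apply Hx. rewrite <- (meet_idem L x). apply pc_le.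
      eapply le_trans. 2: exact H. apply meet_glb; auto.
  - exists x. intros z. split.
    + intros [-> | ->].
      * exists x. apply le_antisym. 2: apply le_top.
        apply join_least. intros y _. apply join_ub. apply meet_lbr.
      * exists (bot L). apply le_antisym.
        -- apply join_least. intros y Hy. apply join_ub. rewrite Hy. apply le_refl.
        -- apply join_least. intros y Hy. apply join_ub. apply le_bot_eq. exact Hy.
    + intros [b ->].
      destruct (classic (le L x b)) as [Hxb|Hxb].
      * left. apply le_antisym. apply le_top.
        apply join_least. intros y _. apply join_ub.
        eapply le_trans. apply meet_lbr. exact Hxb.
      * right.
        assert (E : meet L x b = bot L).
        { destruct (Hat (meet L x b) (meet_lbl L x b)) as [E|E]; auto.
          exfalso. apply Hxb. rewrite <- E. apply meet_lbr. }
        apply le_antisym.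
        -- apply join_least. intros y Hy. apply join_ub. apply le_bot_eq.
           rewrite <- E. apply meet_glb. apply meet_lbr. exact Hy.
        -- apply join_least. intros y Hy. apply join_ub. rewrite Hy. apply bot_le.
Qed.

Lemma split_nz (L : Frame) (d : L -> Rbar) (Hdiam : diameter L d) (Hadm : admissible L d)
  (Hnoiso : forall p : L, ~ isolated_point L p) (x : L) :
  x <> bot L -> exists p q, le L p x /\ le L q x /\ p <> bot L /\ q <> bot L /\ meet L p q = bot L.
Proof.
  intros Hx.
  destruct (classic (exists y, le L y x /\ y <> bot L /\ y <> x)) as [[y [Hyx [Hy0 Hyx']]] | Hno].
  2:{ exfalso. apply (Hnoiso (pcompl L x)). apply atom_iso; auto.
      intros y Hy. destruct (classic (y = bot L)); auto. destruct (classic (y = x)); auto.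
      exfalso; apply Hno; eauto. }
  assert (Hy1 := Hy0). rewrite (Hadm y) in Hy1.
  destruct (join_nz1 L _ Hy1) as [b [[eps [He Hb]] Hb0]].
  exists b, (meet L x (pcompl L b)).
  assert (Hby : le L b y) by (eapply wi_le; eauto).
  split. eapply le_trans; eauto.
  split. apply meet_lbl.
  split. exact Hb0.
  split.
  - intros Hq. apply Hyx'. apply le_antisym. exact Hyx.
    apply (CL L d Hdiam x y eps He). intros c Hc.
    destruct (classic (meet L c b = bot L)) as [E|E].
    + eapply le_trans. 2: apply (bot_le L y). rewrite <- Hq.
      apply meet_mono. apply le_refl. apply pc_le, E.
    + eapply le_trans. apply meet_lbr. apply Hb; auto.
  - eapply le_meet_bot. apply le_refl. apply meet_lbr.
    rewrite meet_comm. apply pc_meet.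
Qed.

Lemma dense_top (L : Frame) (d : L -> Rbar) (Hdiam : diameter L d) (Hadm : admissible L d)
  (Hnoiso : forall p : L, ~ isolated_point L p)
  (Hed : extremally_disconnected L) (e : L)
  (Hdense : forall c, meet L c e = bot L -> c = bot L) : e = top L.
Proof.
  set (adm := fun x : L => x <> bot L /\ exists lam, 0 < lam /\ le L x (deep L d e lam)
                 /\ Rbar_lt (d x) (Finite (lam/2))).
  set (P := fun X : L -> Prop => (forall x, X x -> adm x) /\
              (forall x y, X x -> X y -> x <> y -> meet L x y = bot L)).
  destruct (my_zorn L P) as [M [[HMa HMd] Hmax]].
  { intros F HF Htot. split.
    - intros x [X FX Xx]. apply (proj1 (HF X FX)), Xx.
    - intros x y [X FX Xx] [Y FY Yy] Hxy.
      destruct (Htot X Y FX FY) as [H|H].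
      + apply (proj2 (HF Y FY)); auto.
      + apply (proj2 (HF X FX)); auto. }
  assert (F8 : forall x', adm x' -> exists x, M x /\ meet L x' x <> bot L).
  { intros x' Hx'. apply NNPP. intros Hn.
    apply (Hmax (fun z => M z \/ z = x')).
    - intros t Ht; left; exact Ht.
    - intros H. apply Hn. exists x'. split. apply H; right; reflexivity.
      rewrite meet_idem. apply (proj1 Hx').
    - split.
      + intros x [Hx| ->]; auto.
      + intros x y [Hx| ->] [Hy| ->] Hxy; auto.
        * rewrite meet_comm. apply NNPP. intros Hc. apply Hn. eauto.
        * apply NNPP. intros Hc. apply Hn. eauto.
        * congruence. }
  assert (Hsp : forall x : L, exists pq : L * L, x <> bot L ->
     le L (fst pq) x /\ le L (snd pq) x /\ fst pq <> bot L /\ snd pq <> bot L /\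
     meet L (fst pq) (snd pq) = bot L).
  { intros x. destruct (classic (x = bot L)) as [Hx|Hx].
    - exists (x, x). intros; contradiction.
    - destruct (split_nz L d Hdiam Hadm Hnoiso x Hx) as [p [q H]]. exists (p, q). auto. }
  set (sp := fun x => proj1_sig (constructive_indefinite_description _ (Hsp x))).
  assert (Hspp : forall x, x <> bot L ->
     le L (fst (sp x)) x /\ le L (snd (sp x)) x /\ fst (sp x) <> bot L /\ snd (sp x) <> bot L /\
     meet L (fst (sp x)) (snd (sp x)) = bot L).
  { intros x. unfold sp. exact (proj2_sig (constructive_indefinite_description _ (Hsp x))). }
  set (E := join L (fun p => exists x, M x /\ p = fst (sp x))).
  set (O := join L (fun q => exists x, M x /\ q = snd (sp x))).
  assert (EO : meet L O E = bot L).
  { apply le_bot_eq. unfold E. rewrite meet_join_distr. apply join_least.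
    intros z [p [[x [Mx ->]] ->]]. unfold O. rewrite meet_comm, meet_join_distr.
    apply join_least. intros w [q [[y [My ->]] ->]].
    destruct (HMa x Mx) as [Hx0 _]. destruct (HMa y My) as [Hy0 _].
    destruct (classic (x = y)) as [<-|Hxy].
    - destruct (Hspp x Hx0) as [_ [_ [_ [_ H]]]]. rewrite H. apply le_refl.
    - rewrite (le_meet_bot L (fst (sp x)) x (snd (sp y)) y).
      apply le_refl. apply (Hspp x Hx0). apply (Hspp y Hy0). apply HMd; auto. }
  assert (Key : forall z, ~ le L z e -> exists x, M x /\ le L x z).
  { intros z Hz.
    assert (Hb : exists b, (exists eta, 0 < eta /\ well_inside L d eta b z) /\ ~ le L b e).
    { apply NNPP. intros Hn. apply Hz. rewrite (Hadm z). apply join_least.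
      intros b Hb. apply NNPP. intros Hb'. apply Hn. eauto. }
    destruct Hb as [b [[eta [Heta Hwi]] Hbe]].
    set (y := meet L (meet L b e) (pcompl L (deep L d e eta))).
    assert (Hy0 : y <> bot L).
    { intros H. apply Hbe. eapply F7; eauto. }
    assert (Hye : le L y e).
    { eapply le_trans. apply meet_lbl. apply meet_lbr. }
    destruct (F6 L d Hadm e y Hye Hy0) as [lam [Hlam Hyl]].
    assert (Hmu : 0 < Rmin (lam/2) eta) by (apply Rmin_glb_lt; lra).
    destruct (small_nz L d Hdiam _ _ Hmu Hyl) as [c [Hc Hc0]].
    set (x' := meet L (meet L y (deep L d e lam)) c).
    assert (Hdx' : Rbar_lt (d x') (Finite (Rmin (lam/2) eta))).
    { apply (d_mono L d Hdiam x' c). apply meet_lbr. exact Hc. }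
    assert (Hx'adm : adm x').
    { split. exact Hc0. exists lam. split. exact Hlam. split.
      eapply le_trans. apply meet_lbl. apply meet_lbr.
      eapply Rbar_lt_le_trans. exact Hdx'. simpl. apply Rmin_l. }
    destruct (F8 x' Hx'adm) as [x [Mx Hxx]].
    destruct (HMa x Mx) as [Hx0 [kap [Hkap [Hxk Hdx]]]].
    assert (Hx'b : le L x' b).
    { eapply le_trans. apply meet_lbl. eapply le_trans. apply meet_lbl.
      eapply le_trans. apply meet_lbl. apply meet_lbl. }
    assert (Hlt : kap / 2 < eta).
    { apply Rnot_le_lt. intros Hle.
      assert (H1 : le L x' (deep L d e (kap/2))).
      { apply (F5 L d Hdiam e x x' kap Hkap Hxk Hxx).
        eapply Rbar_lt_le_trans. exact Hdx'. simpl.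
        eapply Rle_trans. apply Rmin_r. exact Hle. }
      assert (H2 : le L x' (deep L d e eta)).
      { eapply le_trans. exact H1. apply deep_mono. exact Hle. }
      assert (H3 : le L x' (pcompl L (deep L d e eta))).
      { eapply le_trans. apply meet_lbl. eapply le_trans. apply meet_lbl. apply meet_lbr. }
      apply Hc0. fold x'. rewrite <- (le_meet_eq L x' _ H2). apply pc_le. exact H3. }
    exists x. split. exact Mx. apply Hwi.
    - eapply Rbar_lt_le_trans. exact Hdx. simpl. lra.
    - eapply nz_mono. 3: rewrite meet_comm; exact Hxx. apply le_refl. exact Hx'b. }
  assert (HEc : le L (pcompl L E) e).
  { apply NNPP. intros Hn. destruct (Key _ Hn) as [x [Mx Hx]].
    destruct (HMa x Mx) as [Hx0 _]. destruct (Hspp x Hx0) as [H1 [_ [H3 _]]].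
    apply H3. rewrite <- (le_meet_eq L (fst (sp x)) E).
    apply pc_le. eapply le_trans; eauto. apply join_ub. eauto. }
  assert (HEcc : le L (pcompl L (pcompl L E)) e).
  { apply NNPP. intros Hn. destruct (Key _ Hn) as [x [Mx Hx]].
    destruct (HMa x Mx) as [Hx0 _]. destruct (Hspp x Hx0) as [_ [H2 [_ [H4 _]]]].
    apply H4. rewrite <- (le_meet_eq L (snd (sp x)) (pcompl L E)).
    apply pc_le. eapply le_trans; eauto.
    eapply le_trans. 2: apply (proj2 (pc_le L E O) EO). apply join_ub. eauto. }
  apply le_antisym. apply le_top. rewrite <- (Hed E). apply join_least.
  intros z [-> | ->]; auto.
Qed.

Theorem corollary5p7 (L : Frame) (d : L -> Rbar)
  (Hd : metric_diameter L d)
  (Hnoiso : forall p : L, ~ isolated_point L p)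
  (Hed : extremally_disconnected L) :
  boolean L.
Proof.
  destruct Hd as [Hdiam Hadm]. intros a.
  apply (dense_top L d Hdiam Hadm Hnoiso Hed).
  intros c Hc.
  assert (Ha : meet L c a = bot L).
  { eapply le_meet_bot. apply le_refl. 2: exact Hc. apply join_ub. left; reflexivity. }
  apply pc_le in Ha.
  rewrite <- (le_meet_eq L c (join2 L a (pcompl L a))). exact Hc.
  eapply le_trans. exact Ha. apply join_ub. right; reflexivity.
Qed.
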